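(* Let $\alpha,\beta,\gamma\in C^\infty(\mathbb R)$ and, for $\phi\in C^\infty(\mathbb R)$, let $Q_\phi=\sum_{n\ge0}\hbar^{2n}\frac{\alpha(u)^n\phi^{(n)}(u)}{n!}u_x^{2n+1}$. Then the flows $u_{\tau_\beta}=Q_\beta$ and $u_{\tau_\gamma}=Q_\gamma$ commute, i.e. $Q_\beta'[Q_\gamma]-Q_\gamma'[Q_\beta]=0$ as formal series in $\hbar$.
   Context: $u_k=\partial_x^ku$; total derivative $D=\sum_{r\ge0}u_{r+1}\partial/\partial u_r$ ($u_0=u$); Fréchet derivative $P'[V]=\sum_{r\ge0}\frac{\partial P}{\partial u_r}D^rV$, extended coefficientwise to formal series in the formal parameter $\hbar$. $\phi^{(n)}$ is the $n$-th derivative. *)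

(* Defs.v *)
From Stdlib Require Import Reals.
From Coquelicot Require Import Coquelicot.
Open Scope R_scope.

(* A point of the jet space: j r is the value of u_r = d^r u / dx^r (u_0 = u). *)
Definition jet := nat -> R.

Definition dfun := jet -> R.

Definition jset (j : jet) (r : nat) (t : R) : jet :=
  fun k => if Nat.eqb k r then t else j k.

Definition pder (r : nat) (f : dfun) : dfun :=
  fun j => Derive (fun t => f (jset j r t)) (j r).

Definition Dtot (f : dfun) : dfun :=
  fun j => Series (fun r => j (S r) * pder r f j).

Definition frechet (P V : dfun) : dfun :=
  fun j => Series (fun r => pder r P j * Nat.iter r Dtot V j).

(* Formal power series in hbar with differential-function coefficients:
   S k is the coefficient of hbar^k. *)
Definition fser := nat -> dfun.

Definition frechet_ser (P V : fser) : fser :=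
  fun k j => sum_f_R0 (fun i => frechet (P i) (V (k - i)%nat) j) k.

Definition Qser (alpha phi : R -> R) : fser :=
  fun k j =>
    if Nat.even k then
      let n := Nat.div2 k in
      (alpha (j 0%nat)) ^ n * Derive_n phi n (j 0%nat) / INR (Factorial.fact n)
        * (j 1%nat) ^ (2 * n + 1)
    else 0.

Definition smooth (f : R -> R) : Prop := forall (n : nat) (x : R), ex_derive_n f n x.

(* Main.v *)
Require Import Defs.
From Stdlib Require Import Reals Lia Lra FunctionalExtensionality.
From Coquelicot Require Import Coquelicot.
Open Scope R_scope.

Definition form (f : R -> R) (m : nat) : dfun := fun j => f (j 0%nat) * j 1%nat ^ m.

Lemma series2 (a : nat -> R) : (forall r, (2 <= r)%nat -> a r = 0) -> Series a = a 0%nat + a 1%nat.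
Proof.
  intros H. apply is_series_unique. unfold is_series.
  apply filterlim_ext_loc with (f := fun _ => a 0%nat + a 1%nat).
  - exists 1%nat. intros n Hn. induction n as [|n IH]. lia.
    destruct n as [|n]. rewrite sum_Sn, sum_O. reflexivity.
    rewrite sum_Sn, <- IH by lia. rewrite (H (S (S n))) by lia.
    unfold plus; simpl. ring.
  - apply filterlim_const.
Qed.

Lemma pder_form_ge2 r f m j : (2 <= r)%nat -> pder r (form f m) j = 0.
Proof.
  intros H. unfold pder, form, jset.
  rewrite (Derive_ext _ (fun _ => f (j 0%nat) * j 1%nat ^ m)).
  apply Derive_const.
  intros t. destruct r as [|[|r]]; try lia. reflexivity.
Qed.

Lemma pder0_form f m j : pder 0 (form f m) j = Derive f (j 0%nat) * j 1%nat ^ m.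
Proof. unfold pder, form, jset. simpl. apply Derive_scal_l. Qed.

Lemma pder1_form f m j : pder 1 (form f m) j = f (j 0%nat) * (INR m * j 1%nat ^ pred m).
Proof.
  unfold pder, form, jset. simpl. rewrite Derive_scal. f_equal.
  rewrite Derive_pow. rewrite Derive_id. ring. apply ex_derive_id.
Qed.

Lemma Dtot_form g l j : Dtot (form g l) j =
  j 1%nat * (Derive g (j 0%nat) * j 1%nat ^ l) + j 2%nat * (g (j 0%nat) * (INR l * j 1%nat ^ pred l)).
Proof.
  unfold Dtot. rewrite series2. rewrite pder0_form, pder1_form. reflexivity.
  intros r Hr. rewrite pder_form_ge2 by exact Hr. ring.
Qed.

Lemma frechet_form f m g l j : frechet (form f m) (form g l) j =
  Derive f (j 0%nat) * j 1%nat ^ m * (g (j 0%nat) * j 1%nat ^ l)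
  + f (j 0%nat) * (INR m * j 1%nat ^ pred m) * Dtot (form g l) j.
Proof.
  unfold frechet. rewrite series2. rewrite pder0_form, pder1_form. reflexivity.
  intros r Hr. rewrite pder_form_ge2 by exact Hr. ring.
Qed.

Lemma comm_form f i g l j :
  frechet (form f (S i)) (form g (S l)) j - frechet (form g (S l)) (form f (S i)) j =
  (INR i * f (j 0%nat) * Derive g (j 0%nat) - INR l * Derive f (j 0%nat) * g (j 0%nat))
  * j 1%nat ^ (S (S (i + l))).
Proof.
  rewrite !frechet_form, !Dtot_form. simpl pred. rewrite !S_INR. simpl pow.
  rewrite pow_add. ring.
Qed.

Definition cf (alpha phi : R -> R) (a : nat) : R -> R :=
  fun u => alpha u ^ a * Derive_n phi a u / INR (Factorial.fact a).
Definition Fq (alpha phi : R -> R) (k : nat) : R -> R :=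
  if Nat.even k then cf alpha phi (Nat.div2 k) else fun _ => 0.

Lemma Qser_form alpha phi k : Qser alpha phi k = form (Fq alpha phi k) (S k).
Proof.
  apply functional_extensionality; intro j. unfold Qser, form, Fq, cf.
  destruct (Nat.even k) eqn:E.
  - replace (2 * Nat.div2 k + 1)%nat with (S k). reflexivity.
    pose proof (Nat.div2_odd k) as H. rewrite <- Nat.negb_even, E in H. simpl in H. lia.
  - ring.
Qed.

Lemma Derive_cf alpha phi a u : smooth alpha -> smooth phi ->
  Derive (cf alpha phi a) u =
  (INR a * Derive alpha u * alpha u ^ pred a * Derive_n phi a u + alpha u ^ a * Derive_n phi (S a) u)
  / INR (Factorial.fact a).
Proof.
  intros Ha Hp. unfold cf. unfold Rdiv. rewrite Derive_scal_l. rewrite Derive_mult.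
  rewrite Derive_pow. simpl Derive_n. ring.
  exact (Ha 1%nat u).
  apply ex_derive_pow. exact (Ha 1%nat u).
  exact (Hp (S a) u).
Qed.

Lemma sum_tele (v : nat -> R) N : sum_f_R0 (fun a => v a - v (S a)) N = v 0%nat - v (S N).
Proof. induction N. simpl. ring. rewrite tech5, IHN. ring. Qed.

Lemma sum_zero (h : nat -> R) N : (forall i, (i <= N)%nat -> h i = 0) -> sum_f_R0 h N = 0.
Proof. intros H. induction N. simpl. apply H; lia.
  rewrite tech5, IHN. rewrite H by lia. ring. intros; apply H; lia. Qed.

Lemma sum_even (h : nat -> R) N : (forall i, Nat.odd i = true -> h i = 0) ->
  sum_f_R0 h (2 * N) = sum_f_R0 (fun a => h (2 * a)%nat) N.
Proof.
  intros H. induction N. reflexivity.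
  replace (2 * S N)%nat with (S (S (2 * N))) by lia.
  rewrite !tech5, IHN, (H (S (2*N))). replace (S (S (2 * N))) with (2 * S N)%nat by lia. ring.
  rewrite <- Nat.negb_even. replace (S (2*N)) with (2 * N + 1)%nat by lia.
  rewrite Nat.even_add, Nat.even_mul. reflexivity.
Qed.

Lemma even2 a : Nat.even (2 * a) = true.
Proof. rewrite Nat.even_mul. reflexivity. Qed.

Lemma core alpha beta gamma k u : smooth alpha -> smooth beta -> smooth gamma ->
  sum_f_R0 (fun i => INR i * Fq alpha beta i u * Derive (Fq alpha gamma (k - i)) u
     - INR (k - i) * Derive (Fq alpha beta i) u * Fq alpha gamma (k - i) u) k = 0.
Proof.
  intros Ha Hb Hg.
  destruct (Nat.even k) eqn:Ek.
  - assert (Hk : k = (2 * Nat.div2 k)%nat) by (pose proof (Nat.div2_odd k) as H;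
      rewrite <- Nat.negb_even, Ek in H; simpl Nat.b2n in H; lia).
    set (N := Nat.div2 k) in Hk. clearbody N. subst k.
    rewrite sum_even.
    2:{ intros i Hi. unfold Fq. rewrite <- Nat.negb_even in Hi.
        destruct (Nat.even i); [discriminate|]. rewrite Derive_const. ring. }
    set (v := fun a => 2 * alpha u ^ N * Derive_n beta a u * Derive_n gamma (S N - a) u
        * INR a * INR (S N - a) / (INR (Factorial.fact a) * INR (Factorial.fact (S N - a)))).
    rewrite (sum_eq _ (fun a => v a - v (S a))).
    + rewrite sum_tele. unfold v. rewrite Nat.sub_diag. simpl INR. unfold Rdiv. ring.
    + intros a Ha'. unfold Fq.
      replace (2 * N - 2 * a)%nat with (2 * (N - a))%nat by lia.
      rewrite !even2, !Nat.div2_double.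
      rewrite !Derive_cf by assumption.
      unfold v, cf.
      replace (S N - S a)%nat with (N - a)%nat by lia.
      replace (S N - a)%nat with (S (N - a)) by lia.
      assert (HN : N = (a + (N - a))%nat) by lia.
      set (b := (N - a)%nat) in *. clearbody b. subst N.
      rewrite !mult_INR, !fact_simpl, !mult_INR, !S_INR. rewrite !pow_add.
      pose proof (INR_fact_neq_0 a). pose proof (INR_fact_neq_0 b).
      assert (INR a + 1 <> 0) by (pose proof (pos_INR a); lra).
      assert (INR b + 1 <> 0) by (pose proof (pos_INR b); lra).
      simpl Derive_n.
      destruct a as [|a]; destruct b as [|b]; cbn [pred pow Nat.add];
        rewrite ?fact_simpl, ?mult_INR, ?S_INR in *; change (INR 0) with 0 in *;
        field; repeat split; try apply INR_fact_neq_0; auto; try (pose proof (pos_INR a); lra); try (pose proof (pos_INR b); lra).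
  - apply sum_zero. intros i Hi. unfold Fq.
    destruct (Nat.even i) eqn:Ei.
    + rewrite Nat.even_sub by exact Hi. rewrite Ek, Ei. simpl.
      rewrite Derive_const. ring.
    + rewrite Derive_const. ring.
Qed.

Lemma sum_rev (a : nat -> R) k : sum_f_R0 a k = sum_f_R0 (fun i => a (k - i)%nat) k.
Proof.
  induction k. reflexivity.
  rewrite decomp_sum with (N := S k) (An := fun i => a (S k - i)%nat) by lia.
  simpl pred. rewrite tech5, IHk. replace (S k - 0)%nat with (S k) by lia.
  simpl. ring.
Qed.

Theorem mainTheorem7 (alpha beta gamma : R -> R)
  (Ha : smooth alpha) (Hb : smooth beta) (Hg : smooth gamma) :
  forall (k : nat) (j : jet),
    frechet_ser (Qser alpha beta) (Qser alpha gamma) k j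
    - frechet_ser (Qser alpha gamma) (Qser alpha beta) k j = 0.
Proof.
  intros k j. unfold frechet_ser.
  rewrite (sum_rev (fun i => frechet (Qser alpha gamma i) (Qser alpha beta (k - i)%nat) j)).
  rewrite <- minus_sum.
  rewrite (sum_eq _ (fun i => (INR i * Fq alpha beta i (j 0%nat) * Derive (Fq alpha gamma (k - i)%nat) (j 0%nat)
     - INR (k - i) * Derive (Fq alpha beta i) (j 0%nat) * Fq alpha gamma (k - i)%nat (j 0%nat)) * j 1%nat ^ (S (S k)))).
  - rewrite <- scal_sum. rewrite core by assumption. ring.
  - intros i Hi. replace (k - (k - i))%nat with i by lia.
    rewrite !Qser_form. rewrite comm_form. replace (i + (k - i))%nat with k by lia. reflexivity.
Qed.
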